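(* Let $\beta\ge1$. For every $\delta>0$ there exists an instance of $1\mid t_j\mid\sum C_j$ with obligatory tests on which $\beta$-SORT satisfies \[ \frac{\mathit{ALG}}{\mathit{OPT}}\ge\frac{\sqrt{4\beta(\beta^2+\beta-1)+1}+1}{2\beta}-\delta. \]
   Context: Scheduling with obligatory tests: jobs $J=\{1,\dots,n\}$ on a single machine; job $j$ has a known test time $t_j\ge0$ and a processing time $p_j\ge0$ revealed only when its test has been executed. The test must be executed before the processing part (which may start any time later); operations are non-preemptive, one at a time. $C_j$ is the completion time of the processing part of $j$; objective $\sum_jC_j$. $\mathit{OPT}$ is the optimal offline objective value (all tests must also be executed); $\mathit{ALG}$ is the algorithm's value. Algorithm $\beta$-SORT (parameter $\beta>0$): maintain a priority queue of available operations, initially containing the test of every job $j$ with priority $\beta t_j$; repeatedly remove a minimum-priority operation and execute it immediately; after executing the test of $j$, insert the processing part of $j$ with priority $p_j$. *)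

(* Defs.v *)
From HB Require Import structures.
From mathcomp Require Import all_boot all_order all_algebra.
From mathcomp Require Import reals.
Set Implicit Arguments. Unset Strict Implicit. Unset Printing Implicit Defensive.
Import Order.TTheory GRing.Theory Num.Theory.
Local Open Scope ring_scope.

(* An operation of an n-job instance: (j, true) = test of job j,
   (j, false) = processing part of job j. *)
Definition op (n : nat) := ('I_n * bool)%type.

Section Sched.
Variables (R : realType) (n : nat) (t p : 'I_n -> R).

Definition dur (o : op n) : R := if o.2 then t o.1 else p o.1.

(* Operations are executed back-to-back from time 0 in the order of s;
   completion time of operation o = total duration of s up to and including o. *)
Definition compl (s : seq (op n)) (o : op n) : R :=
  \sum_(x <- take (index o s).+1 s) dur x.

Definition cost (s : seq (op n)) : R := \sum_(j < n) compl s (j, false).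

Definition all_ops (s : seq (op n)) : Prop := uniq s /\ (forall o : op n, o \in s).

Definition feasible (s : seq (op n)) : Prop :=
  all_ops s /\ forall j : 'I_n, (index (j, true) s < index (j, false) s)%N.

Definition is_OPT (v : R) : Prop :=
  (exists s, feasible s /\ cost s = v) /\ (forall s, feasible s -> v <= cost s).

(* operations in the priority queue after executing the operations in pre:
   all unexecuted tests, and unexecuted processing parts whose test was executed *)
Definition available (pre : seq (op n)) (o : op n) : bool :=
  (o \notin pre) && (o.2 || ((o.1, true) \in pre)).

Definition prio (beta : R) (o : op n) : R := if o.2 then beta * t o.1 else p o.1.

(* s is an execution of beta-SORT (with some tie-breaking): at every step the
   executed operation is in the queue and has minimum priority among those in
   the queue; operations are executed immediately, i.e. back-to-back. *)
Definition betaSORT_run (beta : R) (s : seq (op n)) : Prop :=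
  all_ops s /\
  forall pre o post, s = pre ++ o :: post ->
    available pre o /\ forall o', available pre o' -> prio beta o <= prio beta o'.

End Sched.

(* Main.v *)
Require Import Defs.
From HB Require Import structures.
From mathcomp Require Import all_boot all_order all_algebra.
From mathcomp Require Import reals.
From mathcomp Require Import ring lra zify.
Import Order.TTheory GRing.Theory Num.Theory.
Local Open Scope ring_scope.

Lemma compl_sum (R : realType) (n : nat) (t p : 'I_n -> R) (s : seq (op n)) o : all_ops s ->
  compl t p s o = \sum_(o' : op n) (if (index o' s <= index o s)%N then dur t p o' else 0).
Proof.
case=> us alls; rewrite /compl big_uniq; last exact: take_uniq.
rewrite big_mkcond; apply: eq_bigr => o' _.
by rewrite in_take // ltnS.
Qed.

Lemma sum_op (R : realType) (n : nat) (G : op n -> R) : \sum_(o : op n) G o = \sum_(j < n) (G (j, true) + G (j, false)).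
Proof.
rewrite [RHS](eq_bigr (fun j => \sum_(b : bool) G (j,b))); last by move=> j _; rewrite big_bool.
rewrite pair_big /=. by apply: eq_bigr => -[j b] _.
Qed.


Lemma pairs_count (n : nat) (P : pred 'I_n) (f : 'I_n -> nat) : injective f ->
  (\sum_(j < n) \sum_(j' < n) (P j && P j' && (f j' <= f j)%N : nat)).*2
  = ((\sum_(j < n) (P j : nat)) * (\sum_(j < n) (P j : nat)) + \sum_(j < n) (P j : nat))%N.
Proof.
move=> finj.
rewrite -addnn.
rewrite {2}exchange_big /=.
rewrite -big_split /=.
rewrite big_distrl /= -[RHS]big_split /=.
apply: eq_bigr => j _.
rewrite -big_split /= big_distrr /=.
rewrite (bigD1 j) //= [in RHS](bigD1 j) //= leqnn !andbT.
rewrite (eq_bigr (fun i => (P j * P i)%N)); last first.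
  move=> i hi; case: (P j); case: (P i) => //=.
  case: (ltngtP (f i) (f j)) => // h.
  by move: hi; rewrite (finj _ _ h) eqxx.
rewrite mulnb andbb. lia.
Qed.


Lemma sort_props (R : realType) (n : nat) (t p : 'I_n -> R) (beta : R) (s : seq (op n)) :
  betaSORT_run t p beta s ->
  (forall o : op n, o.2 || (index (o.1, true) s < index o s)%N) /\
  (forall o o' : op n, (index o s <= index o' s)%N ->
     (o'.2 || (index (o'.1, true) s < index o s)%N) -> prio t p beta o <= prio t p beta o').
Proof.
case=> [[us alls] hst].
have dec : forall o : op n, s = take (index o s) s ++ o :: drop (index o s).+1 s.
  move=> o; have e := drop_nth o (_ : (index o s < size s)%N).
  rewrite nth_index ?alls // in e; rewrite -e ?cat_take_drop //.
  by rewrite index_mem alls.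
have avE : forall o o', available (take (index o s) s) o' =
   ((index o s <= index o' s)%N && (o'.2 || (index (o'.1, true) s < index o s)%N)).
  move=> o o'; rewrite /available !in_take ?alls // -leqNgt.
  by [].
split.
  move=> o; have [] := hst _ _ _ (dec o).
  by rewrite avE leqnn.
move=> o o' h1 h2; have [_ ] := hst _ _ _ (dec o).
by apply; rewrite avE h1 h2.
Qed.

Definition tI {R : realType} (m k : nat) (e : R) (j : 'I_(m + k)) : R :=
  if (m <= j)%N then 1 else 1 + 2 * e.
Definition pI {R : realType} (beta : R) (m k : nat) (e : R) (j : 'I_(m + k)) : R :=
  if (m <= j)%N then beta * (1 + e) else 0.

Lemma sort_struct (R : realType) (beta e : R) (m k : nat) (s : seq (op (m + k))) :
  0 < beta -> 0 < e -> betaSORT_run (tI m k e) (pI beta m k e) beta s ->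
  (forall j : 'I_(m + k), (index (j, true) s < index (j, false) s)%N) /\
  (forall j j' : 'I_(m + k), (m <= j')%N -> (m <= j)%N ->
      (index (j', true) s < index (j, false) s)%N) /\
  (forall j j' : 'I_(m + k), (m <= j')%N -> ~~ (m <= j)%N ->
      (index (j', true) s < index (j, false) s)%N /\ (index (j', false) s < index (j, false) s)%N).
Proof.
move=> hb he hrun; have [hav hpr] := sort_props _ _ _ _ _ _ hrun.
have tb : forall j : 'I_(m + k), (index (j, true) s < index (j, false) s)%N.
  by move=> j; exact: (hav (j, false)).
split; first exact: tb.
split.
  move=> j j' hj' hj; case: (ltnP (index (j', true) s) (index (j, false) s)) => // hle.
  have := hpr (j, false) (j', true) hle (orTb _).
  rewrite /prio /= /tI /pI hj hj'. nra.
move=> j j' hj' hj.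
have b1 : (index (j', true) s < index (j, true) s)%N.
  case: (ltnP (index (j', true) s) (index (j, true) s)) => // hle.
  have := hpr (j, true) (j', true) hle (orTb _).
  rewrite /prio /= /tI /pI (negbTE hj) hj'. nra.
have b2 : (index (j', false) s < index (j, true) s)%N.
  case: (ltnP (index (j', false) s) (index (j, true) s)) => // hle.
  have := hpr (j, true) (j', false) hle b1.
  rewrite /prio /= /tI /pI (negbTE hj) hj'. nra.
by split; apply: ltn_trans (tb j).
Qed.

Lemma sum4 (R : realType) (n : nat) (A B C D : 'I_n -> 'I_n -> R) (b c : R) :
  \sum_(j < n) \sum_(j' < n) (A j j' + b * B j j' + c * C j j' + D j j') =
  \sum_(j < n) \sum_(j' < n) A j j' + b * \sum_(j < n) \sum_(j' < n) B j j'
  + c * \sum_(j < n) \sum_(j' < n) C j j' + \sum_(j < n) \sum_(j' < n) D j j'.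
Proof.
rewrite !mulr_sumr -!big_split /=; apply: eq_bigr => j _.
by rewrite !mulr_sumr -!big_split.
Qed.

Lemma sumsum_nat (R : realType) (n : nat) (G : 'I_n -> 'I_n -> nat) :
  \sum_(j < n) \sum_(j' < n) ((G j j')%:R : R) = (\sum_(j < n) \sum_(j' < n) G j j')%:R.
Proof. by rewrite natr_sum; apply: eq_bigr => j _; rewrite natr_sum. Qed.

Lemma prod_count (n : nat) (P1 P2 : pred 'I_n) :
  (\sum_(j < n) \sum_(j' < n) (P1 j && P2 j' : nat))%N =
  ((\sum_(j < n) (P1 j : nat)) * (\sum_(j < n) (P2 j : nat)))%N.
Proof.
rewrite big_distrl /=; apply: eq_bigr => j _.
by rewrite big_distrr /=; apply: eq_bigr => j' _; rewrite mulnb.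
Qed.

Lemma countX (m k : nat) : (\sum_(j < m + k) ((m <= j)%N : nat))%N = k.
Proof.
rewrite big_split_ord /= big1 => [|i _]; last by rewrite /= leqNgt ltn_ord.
rewrite add0n (eq_bigr (fun _ => 1%N)) => [|i _]; last by rewrite /= leq_addr.
by rewrite sum1_card card_ord.
Qed.

Lemma countY (m k : nat) : (\sum_(j < m + k) (~~ (m <= j)%N : nat))%N = m.
Proof.
rewrite big_split_ord /= [X in (_ + X)%N]big1 => [|i _]; last by rewrite /= leq_addr.
rewrite addn0 (eq_bigr (fun _ => 1%N)) => [|i _]; last by rewrite /= -ltnNge ltn_ord.
by rewrite sum1_card card_ord.
Qed.

Lemma count_pairs_R (R : realType) (n : nat) (P : pred 'I_n) (f : 'I_n -> nat) (c : nat) :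
  injective f -> (\sum_(j < n) (P j : nat))%N = c ->
  2 * \sum_(j < n) \sum_(j' < n) (((P j && P j' && (f j' <= f j)%N) : nat)%:R : R) = (c * (c + 1))%:R.
Proof.
move=> fi hc; rewrite sumsum_nat -natrM mul2n.
by rewrite pairs_count // hc mulnDr muln1.
Qed.

Lemma sort_lb (R : realType) (beta e : R) (m k : nat) (s : seq (op (m + k))) :
  1 <= beta -> 0 < e -> betaSORT_run (tI m k e) (pI beta m k e) beta s ->
  2 * (k%:R : R) ^+ 2 + beta * (k%:R * (k%:R + 1)) + 2 * (1 + beta) * m%:R * k%:R
    + m%:R * (m%:R + 1) <= 2 * cost (tI m k e) (pI beta m k e) s.
Proof.
move=> hb he hrun.
have [tb [hA hB]] := sort_struct _ _ _ _ _ _ (lt_le_trans ltr01 hb) he hrun.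
have hall : all_ops s by case: hrun.
set f := fun j : 'I_(m + k) => index (j, false) s.
have finj : injective f.
  move=> j1 j2 h; have : (j1, false) = (j2, false).
    have := congr1 (nth (j1, false) s) h; rewrite /f !nth_index //; case: hall => _; apply.
  by case.
set X := fun j : 'I_(m + k) => (m <= j)%N.
set Y := fun j : 'I_(m + k) => ~~ (m <= j)%N.
pose G j j' : R := ((X j && X j' : nat)%:R) + beta * ((X j && X j' && (f j' <= f j)%N : nat)%:R)
   + (1 + beta) * ((Y j && X j' : nat)%:R) + ((Y j && Y j' && (f j' <= f j)%N : nat)%:R).
have pt : forall j j' : 'I_(m + k), G j j' <=
   (if (index (j', true) s <= index (j, false) s)%N then dur (tI m k e) (pI beta m k e) (j', true) else 0)
 + (if (index (j', false) s <= index (j, false) s)%N then dur (tI m k e) (pI beta m k e) (j', false) else 0).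
  move=> j j'; rewrite /G /X /Y /dur /= /tI /pI.
  case hj: (m <= j)%N; case hj': (m <= j')%N => /=.
  - rewrite (ltnW (hA j j' hj' hj)).
    rewrite /f; case: leqP => hf /=; nra.
  - case: ifP => _; case: ifP => _; lra.
  - have [h1 h2] := hB j j' hj' (negbT hj).
    rewrite (ltnW h1) (ltnW h2). nra.
  - rewrite /f; case: leqP => hf /=.
      rewrite (ltnW (leq_trans (tb j') hf)). lra.
    case: ifP => _; lra.
have -> : cost (tI m k e) (pI beta m k e) s = \sum_(j < m + k) \sum_(j' < m + k)
   ((if (index (j', true) s <= index (j, false) s)%N then dur (tI m k e) (pI beta m k e) (j', true) else 0)
 + (if (index (j', false) s <= index (j, false) s)%N then dur (tI m k e) (pI beta m k e) (j', false) else 0)).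
  rewrite /cost; apply: eq_bigr => j _.
  rewrite compl_sum //. 
  exact: sum_op.
have hsum : \sum_(j < m + k) \sum_(j' < m + k) G j j' <= \sum_(j < m + k) \sum_(j' < m + k)
   ((if (index (j', true) s <= index (j, false) s)%N then dur (tI m k e) (pI beta m k e) (j', true) else 0)
 + (if (index (j', false) s <= index (j, false) s)%N then dur (tI m k e) (pI beta m k e) (j', false) else 0)).
  by apply: ler_sum => j _; apply: ler_sum => j' _; apply: pt.
apply: le_trans (_ : 2 * \sum_(j < m + k) \sum_(j' < m + k) G j j' <= _); last first.
  by rewrite ler_wpM2l.
rewrite /G sum4.
have cX := countX m k. have cY := countY m k.
have t1 := @count_pairs_R R _ (fun j : 'I_(m + k) => (m <= j)%N) f k finj cX.
have t2 := @count_pairs_R R _ (fun j : 'I_(m + k) => ~~ (m <= j)%N) f m finj cY.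
cbv beta in t1; cbv beta in t2; rewrite /X /Y.
rewrite !sumsum_nat !prod_count cX cY.
rewrite sumsum_nat in t1; rewrite sumsum_nat in t2.
move: t1 t2; rewrite !natrM !natrD !mulr1n => t1 t2.

move: t1 t2.
set A := ((\sum_(j < m + k) _)%N)%:R.
set B := ((\sum_(j < m + k) _)%N)%:R.
move=> t1 t2.
have t3 : beta * (2 * A) = beta * (k%:R * (k%:R + 1)) by rewrite t1.
lra.
Qed.

From Stdlib Require Import Classical.

Definition pr2 {n : nat} (j : 'I_n) : seq (op n) := [:: (j, true); (j, false)].

Lemma mem_fl (n : nat) (L : seq 'I_n) (o : op n) :
  (o \in flatten (map pr2 L)) = (o.1 \in L).
Proof.
case: o => j b.
elim: L => [//|a L IH] /=.
rewrite !in_cons IH {IH}.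
by case: b; rewrite !xpair_eqE /= ?andbT ?andbF ?orbF // orbA orbb.
Qed.

Lemma uniq_fl (n : nat) (L : seq 'I_n) : uniq L -> uniq (flatten (map pr2 L)).
Proof.
elim: L => [//|a L IH] /= /andP [haL uL].
rewrite IH // andbT !in_cons !mem_fl /= (negbTE haL) xpair_eqE eqxx /=.
done.
Qed.

Lemma index_fl (n : nat) (L : seq 'I_n) (j : 'I_n) (b : bool) : j \in L ->
  index (j, b) (flatten (map pr2 L)) = (2 * index j L + ~~ b)%N.
Proof.
elim: L => [//|a L IH] /=.
rewrite in_cons /pr2 /= => h.
case: (eqVneq a j) => [-> | hne].
  clear IH; case: b; rewrite /= ?eqxx //.
  by rewrite (_ : ((j, true) == (j, false)) = false) ?eqxx //; apply/eqP; case.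
rewrite /= eq_sym (negbTE hne) /= in h.
have n1 : ((a, true) == (j, b) :> op n) = false by apply/eqP => -[ha _]; move: hne; rewrite ha eqxx.
have n2 : ((a, false) == (j, b) :> op n) = false by apply/eqP => -[ha _]; move: hne; rewrite ha eqxx.
rewrite n1 n2 IH // /=.
rewrite mulnS; lia.
Qed.

Definition s0 (n : nat) : seq (op n) := flatten (map pr2 (enum 'I_n)).

Lemma s0_all (n : nat) : all_ops (s0 n).
Proof.
split; first by apply: uniq_fl; exact: enum_uniq.
by move=> o; rewrite mem_fl mem_enum.
Qed.

Lemma s0_index (n : nat) (j : 'I_n) b : index (j, b) (s0 n) = (2 * j + ~~ b)%N.
Proof. by rewrite /s0 index_fl ?mem_enum // index_enum_ord. Qed.

Lemma s0_feasible (R : realType) (n : nat) (t p : 'I_n -> R) : feasible (s0 n).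
Proof.
split; first exact: s0_all.
by move=> j; rewrite !s0_index /= addn0 addn1.
Qed.

Lemma exists_min (R : realType) (T : eqType) (L : seq T) (Q : T -> Prop) (c : T -> R) :
  (exists x, x \in L /\ Q x) ->
  exists x, x \in L /\ Q x /\ (forall y, y \in L -> Q y -> c x <= c y).
Proof.
elim: L => [[x [//]] | a L IH] hex.
case: (classic (exists x, x \in L /\ Q x)) => [/IH [x0 [h1 [h2 h3]]] | hn].
  case: (classic (Q a)) => hQa.
    case: (lerP (c x0) (c a)) => hc.
      exists x0; split; first by rewrite in_cons h1 orbT.
      split => // y; rewrite in_cons => /orP [/eqP -> // | hy] hQ; exact: h3.
    exists a; split; first by rewrite in_cons eqxx.
    split => // y; rewrite in_cons => /orP [/eqP -> // | hy] hQ.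
    apply: le_trans (ltW hc) (h3 _ hy hQ).
  exists x0; split; first by rewrite in_cons h1 orbT.
  split => // y; rewrite in_cons => /orP [/eqP -> // | hy] hQ; exact: h3.
have hQa : Q a.
  case: hex => x [] ; rewrite in_cons => /orP [/eqP -> // | hx] hQ.
  by exfalso; apply: hn; exists x.
exists a; split; first by rewrite in_cons eqxx.
split => // y; rewrite in_cons => /orP [/eqP -> // | hy] hQ.
by exfalso; apply: hn; exists y.
Qed.

Lemma OPT_exists (R : realType) (n : nat) (t p : 'I_n -> R) :
  exists so, feasible so /\ is_OPT t p (cost t p so).
Proof.
have hex : exists x, x \in permutations (enum {: 'I_n * bool}) /\ feasible x.
  exists (s0 n); split; last exact: (@s0_feasible R n t p).
  rewrite mem_permutations; apply: uniq_perm; first by case: (s0_all n).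
    exact: enum_uniq.
  by move=> o; rewrite mem_enum; case: (s0_all n) => _ ->.
have [x [_ [hf hmin]]] := exists_min _ _ _ _ (cost t p) hex.
exists x; split => //; split; first by exists x.
move=> s hs; apply: hmin => //.
rewrite mem_permutations; apply: uniq_perm; first by case: hs => [[]].
  exact: enum_uniq.
by move=> o; rewrite mem_enum; case: hs => [[_ ->]].
Qed.

Lemma sum3 (R : realType) (n : nat) (A B C : 'I_n -> 'I_n -> R) (a b c : R) :
  \sum_(j < n) \sum_(j' < n) (a * A j j' + b * B j j' + c * C j j') =
  a * \sum_(j < n) \sum_(j' < n) A j j' + b * \sum_(j < n) \sum_(j' < n) B j j'
  + c * \sum_(j < n) \sum_(j' < n) C j j'.
Proof.
rewrite !mulr_sumr -!big_split /=; apply: eq_bigr => j _.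
by rewrite !mulr_sumr -!big_split.
Qed.

Lemma s0_cost (R : realType) (beta e : R) (m k : nat) :
  2 * cost (tI m k e) (pI beta m k e) (s0 (m + k)) =
  (1 + 2 * e) * (m%:R * (m%:R + 1) + 2 * k%:R * m%:R) + (1 + beta + beta * e) * (k%:R * (k%:R + 1)).
Proof.
set X := fun j : 'I_(m + k) => (m <= j)%N.
set Y := fun j : 'I_(m + k) => ~~ (m <= j)%N.
have -> : cost (tI m k e) (pI beta m k e) (s0 (m + k)) = \sum_(j < m + k) \sum_(j' < m + k)
   ((1 + 2 * e) * ((Y j && Y j' && (val j' <= val j)%N : nat)%:R)
    + (1 + beta + beta * e) * ((X j && X j' && (val j' <= val j)%N : nat)%:R)
    + (1 + 2 * e) * ((X j && Y j' : nat)%:R)).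
  rewrite /cost; apply: eq_bigr => j _.
  rewrite compl_sum; last exact: s0_all.
  rewrite sum_op; apply: eq_bigr => j' _.
  rewrite !s0_index.
  have c1 : ((2 * j' + ~~ true) <= (2 * j + ~~ false))%N = (j' <= j)%N.
    by rewrite /=; apply/idP/idP => ?; lia.
  have c2 : ((2 * j' + ~~ false) <= (2 * j + ~~ false))%N = (j' <= j)%N.
    by rewrite /=; apply/idP/idP => ?; lia.
  rewrite c1 c2 /X /Y /dur /tI /pI /=.
  case: (leqP j' j) => hjj; case hj: (m <= j)%N; case hj': (m <= j')%N => /=;
    rewrite ?mulr1n ?mulr0n; first [lra | (exfalso; lia)].
rewrite sum3.
have cX := countX m k. have cY := countY m k.
have finj : injective (fun j : 'I_(m + k) => val j) by exact: val_inj.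
have t1 := @count_pairs_R R _ (fun j : 'I_(m + k) => (m <= j)%N) _ k finj cX.
have t2 := @count_pairs_R R _ (fun j : 'I_(m + k) => ~~ (m <= j)%N) _ m finj cY.
cbv beta in t1; cbv beta in t2; rewrite /X /Y.
rewrite [X in _ * (_ + _ * X)]sumsum_nat prod_count cX cY.
rewrite !mulrDr !mulrA ![2 * (_ + _)]mulrC -![_ * 2 * _]mulrA t1 t2.
rewrite natrM; ring.
Qed.

Lemma cost_lb (R : realType) (n : nat) (t p : 'I_n -> R) (s : seq (op n)) (j0 : 'I_n) :
  feasible s -> (forall j, 0 <= t j) -> (forall j, 0 <= p j) -> t j0 <= cost t p s.
Proof.
move=> [hall hord] ht hp.
have dge : forall o : op n, 0 <= dur t p o by case=> j []; rewrite /dur /=.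
have cge : forall o, 0 <= compl t p s o.
  move=> o; rewrite compl_sum //; apply: sumr_ge0 => o' _; case: ifP => _ //.
rewrite /cost (bigD1 j0) //=.
apply: le_trans (_ : compl t p s (j0, false) <= _); last first.
  by rewrite lerDl; apply: sumr_ge0 => j _.
rewrite compl_sum // (bigD1 (j0, true)) //= (ltnW (hord j0)) /=.
by rewrite lerDl; apply: sumr_ge0 => o' _; case: ifP => _ //.
Qed.

Lemma real_part (R : realType) (beta delta : R) : 1 <= beta -> 0 < delta ->
  exists (m k : nat) (e : R), 0 < e /\ (0 < k)%N /\
   let r := (Num.sqrt (4 * beta * (beta ^+ 2 + beta - 1) + 1) + 1) / (2 * beta) in
   let K := k%:R in let M := m%:R in
   (r - delta) * ((1 + 2*e) * (M*(M+1) + 2*K*M) + (1+beta+beta*e)*(K*(K+1)))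
   <= 2*K^+2 + beta*(K*(K+1)) + 2*(1+beta)*M*K + M*(M+1).
Proof.
move=> hb hd.
set X := 4 * beta * (beta ^+ 2 + beta - 1) + 1.
have hX : 0 <= X by rewrite /X; nra.
set q := Num.sqrt X.
have hq0 : 0 <= q by exact: sqrtr_ge0.
have hq2 : q ^+ 2 = X by rewrite /q sqr_sqrtr.
set r := (q + 1) / (2 * beta).
have hbr : 2 * beta * r = q + 1 by rewrite /r mulrC divfK //; lra.
have hrel : beta * r ^+ 2 - r = beta ^+ 2 + beta - 1.
  have h4 : 4 * beta * (beta * r ^+ 2 - r) = 4 * beta * (beta ^+ 2 + beta - 1).
    have -> : 4 * beta * (beta * r ^+ 2 - r) = (2 * beta * r) ^+ 2 - 2 * (2*beta*r) by ring.
    rewrite hbr. have : (q+1)^+2 - 2*(q+1) = q^+2 - 1 by ring. move=> ->.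
    rewrite hq2 /X; ring.
  apply: (mulfI (_ : 4 * beta != 0)) => //. by apply/eqP; lra.
have hq1 : 2 * beta - 1 < q.
  have : (2 * beta - 1) ^+ 2 < q ^+ 2 by rewrite hq2 /X; nra.
  nra.
have hq3 : q <= 2 * beta ^+ 2 + 2 * beta - 1.
  have : q ^+ 2 <= (2 * beta ^+ 2 + 2 * beta - 1) ^+ 2 by rewrite hq2 /X; nra.
  nra.
have hr1 : 1 < r by nra.
have hr2 : r <= 1 + beta by nra.
set a := (1 + beta - r) / (r - 1).
have ha : (r - 1) * a = 1 + beta - r by rewrite /a mulrC divfK //; apply/eqP; lra.
have ha0 : 0 <= a by rewrite /a divr_ge0 //; lra.
have hid : (1 - r) * a ^+ 2 = 2 + beta - r * (1 + beta).
  apply: (mulfI (_ : r - 1 != 0)); first by apply/eqP; lra.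
  have -> : (r - 1) * ((1 - r) * a ^+ 2) = - ((r-1) * a) ^+ 2 by ring.
  rewrite ha. nra.
set C := r * (2 * a ^+ 2 + 7 * a + 3 * beta + 1) + r.
have hC : 0 <= C by rewrite /C; nra.
set k := (Num.truncn (C / delta)).+1.
have hK : C / delta < k%:R by rewrite /k; case/andP: (truncn_itv (divr_ge0 hC (ltW hd))).
have hK1 : 1 <= (k%:R : R) by rewrite /k ler1n.
have hKd : C < delta * k%:R.
  by rewrite -ltr_pdivrMl // mulrC.
have haK : 0 <= a * k%:R by nra.
set m := Num.truncn (a * k%:R).
have /andP [hm1 hm2] := truncn_itv haK.
have hM0 : 0 <= (m%:R : R) by rewrite ler0n.
exists m, k, (k%:R^-1).
split; first by rewrite invr_gt0; lra.
split; first by [].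
rewrite /=.
rewrite -addn1 natrD in hm2.
move: hM0 hm1 hm2 hK1 hKd haK; rewrite -/m.
move: (m%:R : R) (k%:R : R) => M K hM0 hm1 hm2 hK1 hKd haK.
have heK : K^-1 * K = 1 by rewrite mulVf //; apply/eqP; lra.
move: heK; set e := K^-1 => heK.
have he0 : 0 < e by rewrite /e invr_gt0; lra.
have he1 : e <= 1 by nra.
have hd0 : 0 <= a * K - M by lra.
have hd1 : a * K - M <= 1 by lra.
have hdiff : (M - a * K) ^+ 2 <= 1.
  have -> : (M - a * K) ^+ 2 = (a*K - M) * (a * K - M) by ring.
  nra.
have key : 2*K^+2 + beta*(K*(K+1)) + 2*(1+beta)*M*K + M*(M+1)
   - r * (M^+2 + 2*K*M + (1+beta)*K^+2) = (1 - r) * (M - a*K)^+2 + beta*K + M.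
  have -> : (1 - r) * (M - a*K)^+2 = (1-r)*M^+2 + 2 * ((r-1)*a) * M * K + ((1-r)*a^+2)*K^+2 by ring.
  rewrite ha hid; ring.
set O := (1 + 2*e) * (M*(M+1) + 2*K*M) + (1+beta+beta*e)*(K*(K+1)).
set S := 2*K^+2 + beta*(K*(K+1)) + 2*(1+beta)*M*K + M*(M+1).
set O0 := M^+2 + 2*K*M + (1+beta)*K^+2.
set D := 2 * a ^+ 2 + 7 * a + 3 * beta + 1.
have eK : e * K = 1 by rewrite mulrC -heK mulrC.
have f1 : e * M <= a.
  have : e * M <= e * (a * K) by rewrite ler_wpM2l //; lra.
  by rewrite mulrCA eK mulr1.
have f2 : e * M * M <= a * a * K.
  have : e * M * M <= a * M by rewrite ler_wpM2r.
  have : a * M <= a * (a * K) by rewrite ler_wpM2l.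
  rewrite mulrA; lra.
have f3 : e * K * M <= a * K by rewrite eK mul1r.
have f4 : a <= a * K.
  have : a * 1 <= a * K by rewrite ler_wpM2l.
  by rewrite mulr1.
have f5 : e * K * K = K by rewrite eK mul1r.
have f6 : beta <= beta * K.
  have : beta * 1 <= beta * K by rewrite ler_wpM2l //; lra.
  by rewrite mulr1.
have hE : O - O0 <= D * K.
  have -> : O - O0 = 2*(e*M*M) + 4*(e*K*M) + M + 2*(e*M) + beta*(e*K*K) + (1+beta)*K + beta*(e*K)
    by rewrite /O /O0; ring.
  have -> : D * K = 2*(a*a*K) + 7*(a*K) + 3*(beta*K) + K by rewrite /D; ring.
  rewrite f5 eK. lra.
have key2 : S - r * O0 = (1 - r) * (M - a*K)^+2 + beta*K + M by exact: key.
have hsq : (r - 1) * (M - a*K)^+2 <= (r - 1) * 1 by rewrite ler_wpM2l //; lra.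
have hrO : r * (O - O0) <= r * (D * K) by rewrite ler_wpM2l //; lra.
have hO0 : K * K <= O.
  have -> : O = (1 + 2*e) * (M*(M+1) + 2*K*M) + (1+beta+beta*e)*(K*(K+1)) by [].
  have h1 : 0 <= (1 + 2*e) * (M*(M+1) + 2*K*M) by apply: mulr_ge0; nra.
  have h2 : K * K <= (1+beta+beta*e)*(K*(K+1)).
    have : 1 * (K * K) <= (1+beta+beta*e)*(K*K) by rewrite ler_wpM2r //; nra.
    have : (1+beta+beta*e)*(K*K) <= (1+beta+beta*e)*(K*(K+1)) by rewrite ler_wpM2l; nra.
    lra.
  lra.
have hdO : delta * (K * K) <= delta * O by rewrite ler_wpM2l //; lra.
have hCK : C * K <= (delta * K) * K by rewrite ler_wpM2r //; lra.
have hCD : C = r * D + r by rewrite /C /D.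
have hrK : r <= r * K.
  have : r * 1 <= r * K by rewrite ler_wpM2l //; lra.
  by rewrite mulr1.
rewrite -/O -/S.
have e7 : C * K = r * (D * K) + r * K by rewrite hCD; ring.
have e8 : (delta * K) * K = delta * (K * K) by ring.
have e9 : r * (O - O0) = r * O - r * O0 by ring.
have e10 : (r - 1) * (M - a * K) ^+ 2 = - ((1 - r) * (M - a*K)^+2) by ring.
have e11 : (r - delta) * O = r * O - delta * O by ring.
rewrite e11.
have hb0 : 0 <= beta * K by apply: mulr_ge0; lra.
rewrite e9 in hrO. rewrite e10 in hsq. rewrite e8 in hCK. rewrite e7 in hCK.
clear -key2 hsq hrO hdO hCK hrK hM0 hb0.
lra.
Qed.

Theorem mainTheorem13 (R : realType) (beta : R) (hbeta : 1 <= beta) (delta : R)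
  (hdelta : 0 < delta) :
  exists (n : nat) (t p : 'I_n -> R) (OPT : R),
    (forall j, 0 <= t j) /\ (forall j, 0 <= p j) /\
    is_OPT t p OPT /\ 0 < OPT /\
    forall s : seq (op n), betaSORT_run t p beta s ->
      (Num.sqrt (4 * beta * (beta ^+ 2 + beta - 1) + 1) + 1) / (2 * beta) - delta
        <= cost t p s / OPT.
Proof.
have [m [k [e [he [hk hineq]]]]] := real_part _ _ _ hbeta hdelta.
cbv zeta in hineq.
move: hineq.
set r := (Num.sqrt (4 * beta * (beta ^+ 2 + beta - 1) + 1) + 1) / (2 * beta) => hineq.
have ht : forall j, 0 <= tI m k e j by move=> j; rewrite /tI; case: ifP => _; lra.
have hp : forall j, 0 <= pI beta m k e j by move=> j; rewrite /pI; case: ifP => _; nra.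
have [so [hfs hopt]] := OPT_exists _ _ (tI m k e) (pI beta m k e).
exists (m + k)%N, (tI m k e), (pI beta m k e), (cost (tI m k e) (pI beta m k e) so).
have hj0 : (m < m + k)%N by rewrite -{1}(addn0 m) ltn_add2l.
have hpos : 0 < cost (tI m k e) (pI beta m k e) so.
  have := @cost_lb R _ _ _ so (Ordinal hj0) hfs ht hp.
  rewrite /tI /= leqnn; lra.
do 4 (split => //).
move=> s hs.
have hlb := sort_lb _ _ _ _ _ _ hbeta he hs.
have hc0 := s0_cost R beta e m k.
have hle : cost (tI m k e) (pI beta m k e) so <= cost (tI m k e) (pI beta m k e) (s0 (m + k)).
  by case: hopt => _; apply; exact: (@s0_feasible R _ (tI m k e) (pI beta m k e)).
rewrite ler_pdivlMr //.
case: (lerP 0 (r - delta)) => hrd.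
  have : (r - delta) * cost (tI m k e) (pI beta m k e) so <=
         (r - delta) * cost (tI m k e) (pI beta m k e) (s0 (m + k)) by rewrite ler_wpM2l.
  have : (r - delta) * (2 * cost (tI m k e) (pI beta m k e) (s0 (m + k))) =
    (r - delta) * ((1 + 2 * e) * (m%:R * (m%:R + 1) + 2 * k%:R * m%:R) + (1 + beta + beta * e) * (k%:R * (k%:R + 1))) by rewrite hc0.
  lra.
have : (r - delta) * cost (tI m k e) (pI beta m k e) so <= 0.
  by rewrite nmulr_rle0 // ltW.
have : 0 <= cost (tI m k e) (pI beta m k e) s.
  have hK : 0 <= (k%:R : R) by rewrite ler0n.
  have hM : 0 <= (m%:R : R) by rewrite ler0n.
  have hS : 0 <= 2 * (k%:R : R) ^+ 2 + beta * (k%:R * (k%:R + 1)) + 2 * (1 + beta) * m%:R * k%:R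
    + m%:R * (m%:R + 1).
    by repeat (apply: addr_ge0 || apply: mulr_ge0 || apply: exprn_ge0); lra.
  lra.
lra.
Qed.
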